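(* Let $p$ be an odd prime and $m,r$ integers with $m>0$ and $r\equiv 1\bmod p$. Then for every integer $0\le x<p^m$ there is a unique integer $0\le y<p^m$ such that $\mathcal{S}_r(y)\equiv x\bmod p^m$.
   Context: For integers $s$ and $n\ge0$, $\mathcal{S}_s(n)=\sum_{i=0}^{n-1}s^i$. *)

(* Defs.v *)
From mathcomp Require Import all_boot all_order all_algebra.
Set Implicit Arguments. Unset Strict Implicit. Unset Printing Implicit Defensive.
Import Order.TTheory GRing.Theory Num.Theory.
Local Open Scope ring_scope.

Definition Ssum (s : int) (n : nat) : int := \sum_(i < n) s ^+ i.

(* Main.v *)
Require Import Defs.
From mathcomp Require Import all_boot all_order all_algebra.
From mathcomp Require Import ring zify.
Import Order.TTheory GRing.Theory Num.Theory.
Local Open Scope ring_scope.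

Lemma SsumD s n k : Ssum s (n + k) = Ssum s n + s ^+ n * Ssum s k.
Proof.
rewrite /Ssum big_split_ord /=; congr (_ + _); rewrite mulr_sumr.
by apply: eq_bigr => i _; rewrite exprD.
Qed.

Lemma Ssum_mul s a b : Ssum s (a * b) = Ssum s a * Ssum (s ^+ a) b.
Proof.
elim: b => [|b IH]; first by rewrite muln0 /Ssum !big_ord0 mulr0.
rewrite mulnS addnC SsumD IH exprM.
rewrite -[b.+1]addn1 SsumD /Ssum big_ord1 expr0 mulr1.
ring.
Qed.

Lemma Ssum_subX s k : s ^+ k - 1 = (s - 1) * Ssum s k.
Proof. by rewrite subrX1. Qed.

Lemma Ssum_modp (p : int) s k : (p %| s - 1)%Z -> (p %| Ssum s k - k%:Z)%Z.
Proof.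
move=> hp; elim: k => [|k IH]; first by rewrite /Ssum big_ord0 subrr dvdz0.
rewrite /Ssum big_ord_recr /= -/(Ssum s k).
have -> : Ssum s k + s ^+ k - k.+1%:Z = (Ssum s k - k%:Z) + (s ^+ k - 1).
  by rewrite -addn1 PoszD; ring.
by rewrite rpredD // Ssum_subX dvdz_mulr.
Qed.

Lemma Ssum_sub_sum s n : Ssum s n - n%:Z = (s - 1) * \sum_(i < n) Ssum s i.
Proof.
elim: n => [|n IH]; first by rewrite /Ssum !big_ord0 subrr mulr0.
rewrite big_ord_recr /= mulrDr -IH {1}/Ssum big_ord_recr /= -/(Ssum s n).
rewrite -Ssum_subX -addn1 PoszD; ring.
Qed.

Lemma sum_posz n : \sum_(i < n) (i%:Z) = (\sum_(i < n) i)%N%:Z.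
Proof.
elim: n => [|n IH]; first by rewrite !big_ord0.
by rewrite !big_ord_recr /= IH PoszD.
Qed.

Lemma Ssum_p (p : nat) s : prime p -> odd p -> (p%:Z %| s - 1)%Z ->
  ((p * p)%N%:Z %| Ssum s p - p%:Z)%Z.
Proof.
move=> pp op hs; rewrite Ssum_sub_sum PoszM dvdz_mul //.
have -> : \sum_(i < p) Ssum s i = \sum_(i < p) (Ssum s i - i%:Z) + \sum_(i < p) (i%:Z).
  by rewrite -big_split /=; apply: eq_bigr => i _; rewrite subrK.
rewrite rpredD //; first by apply: rpred_sum => i _; apply: Ssum_modp.
rewrite sum_posz -(big_mkord xpredT (fun i => i)) bin2_sum.
rewrite dvdzE /=; apply: prime_dvd_bin => //.
have p2 := prime_gt1 pp.
have : p != 2%N by apply/eqP => e; rewrite e in op.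
lia.
Qed.

Lemma key (p : nat) j : prime p -> odd p -> forall s k, (p%:Z %| s - 1)%Z ->
  ((p ^ j)%N%:Z %| Ssum s k)%Z -> (p ^ j %| k)%N.
Proof.
move=> pp op; elim: j => [|j IH] s k hs hd; first by rewrite expn0 dvd1n.
have hpk : (p %| k)%N.
  have h1 : (p%:Z %| Ssum s k)%Z.
    by apply: dvdz_trans hd; rewrite dvdzE /= expnS dvdn_mulr.
  have h2 := @Ssum_modp _ _ k hs.
  have : (p%:Z %| Ssum s k - (Ssum s k - k%:Z))%Z by rewrite rpredB.
  by rewrite opprB addrC subrK dvdzE.
case/dvdnP: hpk hd => k' -> hd; rewrite mulnC; rewrite mulnC Ssum_mul in hd.
have [q hq] := dvdzP (@Ssum_p p s pp op hs).
have e : Ssum s p = p%:Z * (1 + q * p%:Z).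
  by move/eqP: hq; rewrite subr_eq => /eqP ->; rewrite PoszM; ring.
rewrite e expnS PoszM -mulrA dvdz_mul2l in hd; last first.
  by rewrite eqz_nat -lt0n prime_gt0.
have cop : coprimez (p ^ j)%N%:Z (1 + q * p%:Z).
  rewrite coprimezE /=; apply: coprimeXl; rewrite prime_coprime //.
  apply/negP => h; rewrite -/(dvdz p (1 + q * p%:Z)) in h.
  have : (p%:Z %| (1 + q * p%:Z) - q * p%:Z)%Z.
    by rewrite rpredB // dvdz_mull // dvdzz.
  rewrite addrK dvdz1 /= => /eqP h1; rewrite h1 in pp.
  by [].
rewrite Gauss_dvdzr // in hd.
rewrite expnS dvdn_pmul2l ?prime_gt0 //.
apply: IH hd.
by rewrite Ssum_subX dvdz_mulr.
Qed.

Lemma Sinj (p m : nat) (r : int) : prime p -> odd p -> (r == 1 %[mod (p%:Z)])%Z ->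
  forall a b : nat, (a < p ^ m)%N -> (b < p ^ m)%N ->
  (Ssum r a == Ssum r b %[mod ((p ^ m)%N%:Z)])%Z -> a = b.
Proof.
move=> pp op hr; rewrite eqz_mod_dvd in hr.
move=> a b; wlog hab : a b / (a <= b)%N.
  move=> W ha hb he; case: (leqP a b) => h; first exact: W.
  by apply/esym/W => //; [exact: ltnW | rewrite eqz_mod_dvd -opprB rpredN -eqz_mod_dvd].
move=> ha hb; rewrite eqz_mod_dvd -(subnKC hab) SsumD opprD addrA subrr add0r rpredN.
have cop : coprimez (p ^ m)%N%:Z (r ^+ a).
  rewrite coprimezE /= abszX; apply: coprimeXl; apply: coprimeXr.
  rewrite prime_coprime //; apply/negP => h; rewrite -/(dvdz p r) in h.
  have : (p%:Z %| r - (r - 1))%Z by rewrite rpredB.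
  rewrite opprB addrC subrK dvdz1 /= => /eqP h1; by rewrite h1 in pp.
rewrite Gauss_dvdzr // => /(@key p m pp op r _ hr) hd.
case: (posnP (b - a)) => h0; first lia.
have := dvdn_leq h0 hd; lia.
Qed.

Theorem lemma2p2 (p m : nat) (r : int) :
  prime p -> odd p -> (0 < m)%N -> (r == 1 %[mod (p%:Z)])%Z ->
  forall x : int, 0 <= x -> x < (p ^ m)%N%:Z ->
  exists! y : nat, (y < p ^ m)%N /\ (Ssum r y == x %[mod ((p ^ m)%N%:Z)])%Z.
Proof.
move=> pp op m0 hr x x0 xlt.
have inj := @Sinj p m r pp op hr.
set N := (p ^ m)%N in inj xlt *.
have N0 : (0 < N)%N by rewrite expn_gt0 prime_gt0.
pose g y := absz (Ssum r y %% N%:Z)%Z.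
have e : forall y, (g y)%:Z = (Ssum r y %% N%:Z)%Z.
  move=> y; rewrite /g gez0_abs // modz_ge0 //.
  by rewrite eqz_nat -lt0n.
have gN : forall y, (g y < N)%N.
  by move=> y; rewrite -ltz_nat e ltz_pmod // ltz_nat.
have U : uniq (map g (iota 0 N)).
  rewrite map_inj_in_uniq ?iota_uniq // => y1 y2; rewrite !mem_iota /= !add0n.
  move=> h1 h2 he; apply: inj => //; apply/eqP.
  by rewrite -!e he.
have sub : {subset map g (iota 0 N) <= iota 0 N}.
  by move=> z /mapP [y _ ->]; rewrite mem_iota add0n gN.
have sz : (size (iota 0 N) <= size (map g (iota 0 N)))%N by rewrite size_map.
have [_ S] := uniq_min_size U sub sz.
have xs : absz x \in iota 0 N by rewrite mem_iota add0n -ltz_nat gez0_abs.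
rewrite -S in xs; case/mapP: xs => y hy hxy.
have ex : x = (Ssum r y %% N%:Z)%Z by rewrite -e -hxy gez0_abs.
have ey : (Ssum r y == x %[mod N%:Z])%Z by rewrite -ex modz_small ?x0.
exists y; split.
  by split => //; move: hy; rewrite mem_iota add0n.
move=> y' [hy' he]; apply: inj => //.
  by move: hy; rewrite mem_iota add0n.
by rewrite (eqP ey) eq_sym.
Qed.
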